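(* Let $\psi$ be a saturation with saturation level $\alpha>0$ and $\mathbf{u}:[0,L]\to\mathbb{R}^P$ a given velocity, and consider the explicit finite-volume scheme for the system $\partial_t\boldsymbol{\rho}+\partial_x(\mathrm{diag}(\boldsymbol{\rho})\psi(\sigma)\mathbf{u})=0$ on $(0,L)$ described in the context. Fix $n$ and suppose $\boldsymbol{\rho}_i^n\ge0$ entry-wise and $\sigma_i^n\le\alpha$ for all $i$. Then $\boldsymbol{\rho}_i^{n+1}\ge0$ entry-wise and $\sigma_i^{n+1}\le\alpha$ for all $i$, provided $$\Delta t\le\frac{\Gamma}{4\|\mathbf{u}\|}\Delta x,\qquad \Gamma=\min\Big\{\frac{2}{\psi(0)},\gamma\Big\},\quad \gamma=\inf_{s\in(0,\alpha)}\frac{\alpha-s}{\alpha\psi(s)},\quad \|\mathbf{u}\|=\max_{i,p}|(\mathbf{u}_{i+1/2})_p|.$$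
   Context: A saturation is a continuous function $\psi:[0,\infty)\to\mathbb{R}$ that is non-increasing and for which there is $\alpha>0$ (the saturation level) with $\psi(\alpha)=0$ and $(\alpha-s)\psi(s)>0$ for $s\neq\alpha$. Discretisation: $\Delta x=L/M$, cells with centres $x_i=\Delta x(i-1/2)$ and interfaces $x_{i+1/2}$, $i=1,\dots,M$; $\boldsymbol{\rho}_i^n\in\mathbb{R}^P$ is the vector of $P$ species densities on cell $i$ at time $t^n=n\Delta t$, and $\sigma_i^n=\sum_{p=1}^P(\boldsymbol{\rho}_i^n)_p$. The scheme is $$\frac{\boldsymbol{\rho}_i^{n+1}-\boldsymbol{\rho}_i^n}{\Delta t}+\frac{\mathbf{F}_{i+1/2}^n-\mathbf{F}_{i-1/2}^n}{\Delta x}=0,\qquad \mathbf{F}_{i+1/2}^n=\mathrm{diag}(\boldsymbol{\rho}_i^E)\psi_{i+1}^W\mathbf{u}_{i+1/2}^++\mathrm{diag}(\boldsymbol{\rho}_{i+1}^W)\psi_i^E\mathbf{u}_{i+1/2}^-,$$ with $\mathbf{F}_{1/2}^n=\mathbf{F}_{M+1/2}^n=0$, $\mathbf{u}_{i+1/2}=\mathbf{u}(x_{i+1/2})$, where $(\cdot)^+=\max\{\cdot,0\}$, $(\cdot)^-=\min\{\cdot,0\}$ entry-wise; $\boldsymbol{\rho}_i^{E}=\boldsymbol{\rho}_i^n+\frac{\Delta x}{2}(\boldsymbol{\rho}_x)_i^n$, $\boldsymbol{\rho}_i^{W}=\boldsymbol{\rho}_i^n-\frac{\Delta x}{2}(\boldsymbol{\rho}_x)_i^n$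 with $(\boldsymbol{\rho}_x)_i^n=\mathrm{minmod}\big(\theta\frac{\boldsymbol{\rho}_{i+1}^n-\boldsymbol{\rho}_i^n}{\Delta x},\frac{\boldsymbol{\rho}_{i+1}^n-\boldsymbol{\rho}_{i-1}^n}{2\Delta x},\theta\frac{\boldsymbol{\rho}_i^n-\boldsymbol{\rho}_{i-1}^n}{\Delta x}\big)$ applied entry-wise; $\psi_i^E=\psi(\sigma_i^E)$, $\psi_i^W=\psi(\sigma_i^W)$ with $\sigma_i^{E}=\sigma_i^n+\frac{\Delta x}{2}(\sigma_x)_i^n$, $\sigma_i^{W}=\sigma_i^n-\frac{\Delta x}{2}(\sigma_x)_i^n$, $(\sigma_x)_i^n=\mathrm{minmod}\big(\theta\frac{\sigma_{i+1}^n-\sigma_i^n}{\Delta x},\frac{\sigma_{i+1}^n-\sigma_{i-1}^n}{2\Delta x},\theta\frac{\sigma_i^n-\sigma_{i-1}^n}{\Delta x}\big)$; $\theta=2$. Here $\mathrm{minmod}(a,b,c)=\min(a,b,c)$ if $a,b,c>0$, $\max(a,b,c)$ if $a,b,c<0$, and $0$ otherwise. The hypotheses on $\boldsymbol{\rho}_i^n$ apply to all values entering the slope computations. *)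

(* Defs.v *)
From HB Require Import structures.
From mathcomp Require Import all_boot all_order all_algebra.
From mathcomp Require Import all_classical all_reals all_analysis.
Set Implicit Arguments. Unset Strict Implicit. Unset Printing Implicit Defensive.
Import Order.TTheory GRing.Theory Num.Theory.
Import numFieldNormedType.Exports.
Local Open Scope classical_set_scope.
Local Open Scope ring_scope.

Section Scheme.
Variable R : realType.

Definition saturation (psi : R -> R) (alpha : R) : Prop :=
  [/\ {within `[0, +oo[, continuous psi},
      (forall s t, 0 <= s -> s <= t -> psi t <= psi s),
      0 < alpha, psi alpha = 0 &
      (forall s, 0 <= s -> s != alpha -> 0 < (alpha - s) * psi s)].

Definition minmod (a b c : R) : R :=
  if [&& 0 < a, 0 < b & 0 < c] then Num.min a (Num.min b c)
  else if [&& a < 0, b < 0 & c < 0] then Num.max a (Num.max b c)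
  else 0.

Definition theta : R := 2.

Definition slope (dx : R) (v : nat -> R) (i : nat) : R :=
  minmod (theta * (v i.+1 - v i) / dx) ((v i.+1 - v i.-1) / (2 * dx))
         (theta * (v i - v i.-1) / dx).

Definition recE (dx : R) (v : nat -> R) (i : nat) : R := v i + dx / 2 * slope dx v i.
Definition recW (dx : R) (v : nat -> R) (i : nat) : R := v i - dx / 2 * slope dx v i.

Definition sigma (P : nat) (rho : nat -> 'I_P -> R) (i : nat) : R :=
  \sum_(p < P) rho i p.

Definition posp (x : R) : R := Num.max x 0.
Definition negp (x : R) : R := Num.min x 0.

(* numerical flux F_{i+1/2}, species p; F_{1/2} = F_{M+1/2} = 0 *)
Definition flux (P M : nat) (dx : R) (psi : R -> R) (u : R -> 'I_P -> R)
    (rho : nat -> 'I_P -> R) (i : nat) (p : 'I_P) : R :=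
  if (i == 0)%N || (M <= i)%N then 0 else
  let ui := u (dx * i%:R) p in
  let sg := sigma rho in
  recE dx (fun j => rho j p) i * psi (recW dx sg i.+1) * posp ui
  + recW dx (fun j => rho j p) i.+1 * psi (recE dx sg i) * negp ui.

(* one explicit step: rho_i^{n+1} for cells i = 1..M *)
Definition step (P M : nat) (dx dt : R) (psi : R -> R) (u : R -> 'I_P -> R)
    (rho : nat -> 'I_P -> R) (i : nat) (p : 'I_P) : R :=
  rho i p - dt / dx * (flux M dx psi u rho i p - flux M dx psi u rho i.-1 p).

Definition gammaS (psi : R -> R) (alpha : R) : R :=
  inf [set (alpha - s) / (alpha * psi s) | s in [set s | 0 < s < alpha]].

Definition GammaS (psi : R -> R) (alpha : R) : R :=
  Num.min (2 / psi 0) (gammaS psi alpha).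

(* ||u|| = max over interfaces x_{i+1/2} (i = 0..M) and species of |u_p| *)
Definition unorm (P M : nat) (dx : R) (u : R -> 'I_P -> R) : R :=
  \big[Num.max/0]_(i < M.+1) \big[Num.max/0]_(p < P) `|u (dx * i%:R) p|.

End Scheme.

(* Main.v *)
Require Import Defs.
From HB Require Import structures.
From mathcomp Require Import all_boot all_order all_algebra.
From mathcomp Require Import all_classical all_reals all_analysis.
From mathcomp Require Import ring lra.
Import Order.TTheory GRing.Theory Num.Theory.
Local Open Scope ring_scope.
Local Open Scope classical_set_scope.
Local Open Scope ring_scope.
Lemma rec_sum (R : realType) (dx : R) (v : nat -> R) i :
  recE dx v i + recW dx v i = 2 * v i.
Proof. rewrite /recE /recW; lra. Qed.

Lemma rec_bnd (R : realType) (dx lo hi : R) (v : nat -> R) i : 0 < dx ->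
  lo <= v i.-1 <= hi -> lo <= v i <= hi -> lo <= v i.+1 <= hi ->
  [/\ lo <= recE dx v i, recE dx v i <= hi, lo <= recW dx v i & recW dx v i <= hi].
Proof.
move=> hdx /andP[l0 h0] /andP[l1 h1] /andP[l2 h2].
rewrite /recE /recW /slope /minmod /theta.
set a := 2 * (v i.+1 - v i) / dx.
set b := (v i.+1 - v i.-1) / (2 * dx).
set c := 2 * (v i - v i.-1) / dx.
have ea : dx / 2 * a = v i.+1 - v i by rewrite /a; field; lra.
have ec : dx / 2 * c = v i - v i.-1 by rewrite /c; field; lra.
have hd : 0 <= dx / 2 by lra.
case: ifP => [/and3P[ha hb hc] | _].
  set s := Num.min a (Num.min b c).
  have sa : s <= a by rewrite /s ge_min lexx.
  have sc : s <= c by rewrite /s ge_min ge_min lexx !orbT.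
  have s0 : 0 < s by rewrite /s lt_min ha lt_min hb hc.
  have := ler_wpM2l hd sa; have := ler_wpM2l hd sc.
  have : 0 <= dx / 2 * s by apply: mulr_ge0; lra.
  move=> *; split; lra.
case: ifP => [/and3P[ha hb hc] | _].
  set s := Num.max a (Num.max b c).
  have sa : a <= s by rewrite /s le_max lexx.
  have sc : c <= s by rewrite /s le_max le_max lexx !orbT.
  have s0 : s < 0 by rewrite /s gt_max ha gt_max hb hc.
  have := ler_wpM2l hd sa; have := ler_wpM2l hd sc.
  have : dx / 2 * s <= 0 by apply: mulr_ge0_le0; lra.
  move=> *; split; lra.
rewrite mulr0 addr0 subr0; split; lra.
Qed.

Lemma rec_nn (R : realType) (dx : R) (v : nat -> R) i : 0 < dx ->
  0 <= v i.-1 -> 0 <= v i -> 0 <= v i.+1 ->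
  [/\ 0 <= recE dx v i, 0 <= recW dx v i, recE dx v i <= 2 * v i & recW dx v i <= 2 * v i].
Proof.
move=> hdx h0 h1 h2.
have [] := @rec_bnd R dx 0 (v i.-1 + v i + v i.+1) v i hdx.
- by rewrite h0 /=; lra.
- by rewrite h1 /=; lra.
- by rewrite h2 /=; lra.
move=> a _ b _; have := @rec_sum R dx v i; split; lra.
Qed.
Theorem proposition3p3 (R : realType) (P M : nat) (L alpha dt : R)
    (psi : R -> R) (u : R -> 'I_P -> R) (rho : nat -> 'I_P -> R) :
  (0 < M)%N -> 0 < L -> 0 < dt ->
  saturation psi alpha ->
  (forall i p, (i <= M.+1)%N -> 0 <= rho i p) ->
  (forall i, (i <= M.+1)%N -> sigma rho i <= alpha) ->
  4 * unorm M (L / M%:R) u * dt <= GammaS psi alpha * (L / M%:R) ->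
  forall i, (1 <= i <= M)%N ->
    (forall p, 0 <= step M (L / M%:R) dt psi u rho i p) /\
    sigma (step M (L / M%:R) dt psi u rho) i <= alpha.
Proof.
move=> HM HL Hdt [Hcont Hmono Ha Hpa Hsgn] Hrho Hsig Hcfl i /andP[Hi1 HiM].
set dx := L / M%:R.
have Hdx : 0 < dx by apply: divr_gt0 => //; rewrite ltr0n.
set U := unorm M dx u.
have HU : 0 <= U.
  rewrite /U /unorm; apply: (big_ind (fun x : R => 0 <= x)) => //=.
    by move=> x y hx hy; rewrite le_max hx.
  move=> j _; apply: (big_ind (fun x : R => 0 <= x)) => //=.
  by move=> x y hx hy; rewrite le_max hx.
have Hu : forall j p, (j <= M)%N -> `|u (dx * j%:R) p| <= U.
  move=> j p hj; rewrite /U /unorm.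
  have hj' : (j < M.+1)%N by [].
  apply: le_trans (le_bigmax _ _ (Ordinal hj')).
  exact: (le_bigmax _ (fun p => `|u (dx * j%:R) p|) p).
have Hpsi0 : 0 < psi 0.
  have := Hsgn 0 (lexx 0); rewrite eq_sym (gt_eqF Ha) subr0 => /(_ isT).
  by rewrite pmulr_rgt0.
have Hpnn : forall s, 0 <= s <= alpha -> 0 <= psi s.
  by move=> s /andP[h0 h1]; rewrite -Hpa; apply: Hmono.
have Hple : forall s, 0 <= s -> psi s <= psi 0.
  by move=> s h0; apply: Hmono.
set g := gammaS psi alpha.
have Hgi : forall s, 0 < s < alpha -> g * alpha * psi s <= alpha - s.
  have psp : forall s, 0 < s < alpha -> 0 < psi s.
    move=> s /andP[h0 h1]; have := Hsgn s (ltW h0).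
    rewrite (lt_eqF h1) => /(_ isT); rewrite pmulr_rgt0 //; lra.
  move=> s hs.
  have Hlb : has_lbound [set (alpha - s) / (alpha * psi s) | s in [set s | 0 < s < alpha]].
    exists 0 => y [s' hs' <-]; apply: divr_ge0.
      by move: hs' => /andP[? ?]; lra.
    by apply: mulr_ge0; [lra | apply/ltW/psp].
  have := ge_inf Hlb (ex_intro2 _ _ s hs erefl).
  rewrite -/(gammaS psi alpha) -/g ler_pdivlMr ?mulrA //.
  by apply: mulr_gt0 => //; apply: psp.
have Hg0 : g * psi 0 <= 1.
  case: (lerP g 0) => hg.
    have : g * psi 0 <= 0 by apply: mulr_le0_ge0 => //; apply: ltW.
    lra.
  case: (lerP (g * psi 0) 1) => // h; exfalso.
  have /continuous_within_itvcyP [_ Hc] := Hcont.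
  have hz : 1 / g < psi 0 by rewrite ltr_pdivrMr // mulrC.
  have H1 := @cvgr_gt R R _ (at_right_proper_filter (0:R)) psi (psi 0) Hc (1 / g) hz.
  have [x [[hx0 hxa] hx]] := filter_ex (filterI (filterI (nbhs_right_gt 0) (nbhs_right_lt Ha)) H1).
  have := Hgi x; rewrite hx0 hxa => /(_ isT).
  move: hx; rewrite ltr_pdivrMr // mulrC => hx.
  have : alpha * 1 < alpha * (g * psi x) by rewrite ltr_pM2l.
  lra.
have Hg : forall s, 0 <= s <= alpha -> g * alpha * psi s <= alpha - s.
  move=> s /andP[h0 h1].
  case: (eqVneq s 0) => [->|sn0].
    have : alpha * (g * psi 0) <= alpha * 1 by rewrite ler_pM2l.
    lra.
  case: (eqVneq s alpha) => [->|sna].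
    by rewrite Hpa mulr0 subrr.
  apply: Hgi; apply/andP; split; rewrite lt_neqAle ?h0 ?h1 ?andbT //.
  by rewrite eq_sym.
set lam := dt / dx.
have Hlam : 0 <= lam by apply: divr_ge0; lra.
have HK : 4 * (lam * U) <= GammaS psi alpha.
  rewrite (_ : 4 * (lam * U) = (4 * U * dt) / dx); last by rewrite /lam; field; lra.
  by rewrite ler_pdivrMr.
have HK1 : 4 * (lam * U) <= g.
  by apply: le_trans HK _; rewrite /GammaS ge_min lexx orbT.
have HK2 : 4 * (lam * U) * psi 0 <= 2.
  rewrite -ler_pdivlMr //; apply: le_trans HK _; rewrite /GammaS ge_min lexx //.
have Fint : forall j p, (0 < j < M)%N -> flux M dx psi u rho j p =
   recE dx (fun j => rho j p) j * psi (recW dx (sigma rho) j.+1) * posp (u (dx * j%:R) p)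
 + recW dx (fun j => rho j p) j.+1 * psi (recE dx (sigma rho) j) * negp (u (dx * j%:R) p).
  by move=> j p /andP[h1 h2]; rewrite /flux (gtn_eqF h1) leqNgt h2.
have Fbd : forall j p, (j == 0)%N || (M <= j)%N -> flux M dx psi u rho j p = 0.
  by move=> j p h; rewrite /flux h.
have Hs0 : forall j, (j <= M.+1)%N -> 0 <= sigma rho j.
  by move=> j hj; apply: sumr_ge0 => p _; apply: Hrho.
have HrE : forall j p, (0 < j <= M)%N ->
  [/\ 0 <= recE dx (fun j => rho j p) j, 0 <= recW dx (fun j => rho j p) j,
      recE dx (fun j => rho j p) j <= 2 * rho j p & recW dx (fun j => rho j p) j <= 2 * rho j p].
  move=> j p /andP[h1 h2]; apply: rec_nn => //; apply: Hrho.
  - by apply: leq_trans (leq_pred j) _; apply: leqW.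
  - by apply: leqW.
  - by [].
have HsE : forall j, (0 < j <= M)%N ->
  [/\ 0 <= recE dx (sigma rho) j, recE dx (sigma rho) j <= alpha,
      0 <= recW dx (sigma rho) j & recW dx (sigma rho) j <= alpha].
  move=> j /andP[h1 h2]; have hj1 : (j.-1 <= M.+1)%N.
    by apply: leq_trans (leq_pred j) _; apply: leqW.
  apply: rec_bnd => //; apply/andP; split; (apply: Hs0 || apply: Hsig) => //; exact: leqW.
have Hpos : forall j p, (j <= M)%N -> [/\ posp (u (dx * j%:R) p) <= U, 0 <= posp (u (dx * j%:R) p),
    - U <= negp (u (dx * j%:R) p) & negp (u (dx * j%:R) p) <= 0].
  move=> j p hj.
  have := Hu j p hj; rewrite ler_norml => /andP[h1 h2].
  rewrite /posp /negp ge_max le_max lexx orbT HU h2 le_min ge_min lexx orbT h1 /=.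
  split => //; lra.
case: i Hi1 HiM => [//|k] _ HkM.
have hk1 : (0 < k.+1 <= M)%N by rewrite HkM.
split.
  move=> p; rewrite /step /= -/lam -/dx.
  set X := flux M dx psi u rho k.+1 p; set Y := flux M dx psi u rho k p.
  have [e0 w0 e2 w2] := HrE k.+1 p hk1.
  have hr0 : 0 <= rho k.+1 p by apply: Hrho; apply: leqW.
  have hX : X <= recE dx (fun j => rho j p) k.+1 * psi 0 * U.
    case: (ltnP k.+1 M) => h.
      rewrite /X Fint; last by rewrite h.
      have [s1 s2 s3 s4] := HsE k.+2 h.
      have [s5 s6 _ _] := HsE k.+1 hk1.
      have [_ w0' _ _] := HrE k.+2 p h.
      have [q1 q2 q3 q4] := Hpos k.+1 p (ltnW h).
      have t1 : recE dx (fun j => rho j p) k.+1 * psi (recW dx (sigma rho) k.+2) * posp (u (dx * k.+1%:R) p)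
          <= recE dx (fun j => rho j p) k.+1 * psi 0 * U.
        apply: ler_pM => //.
          by apply: mulr_ge0 => //; apply: Hpnn; rewrite s3 s4.
        apply: ler_pM => //; first by apply: Hpnn; rewrite s3 s4.
        exact: Hple.
      have t2 : recW dx (fun j => rho j p) k.+2 * psi (recE dx (sigma rho) k.+1) * negp (u (dx * k.+1%:R) p) <= 0.
        by apply: mulr_ge0_le0 => //; apply: mulr_ge0 => //; apply: Hpnn; rewrite s5 s6.
      lra.
    rewrite /X Fbd; last by rewrite h orbT.
    by apply: mulr_ge0 => //; apply: mulr_ge0 => //; lra.
  have hY : - (recW dx (fun j => rho j p) k.+1 * psi 0 * U) <= Y.
    case: (eqVneq k 0%N) => [k0|kn0].
      rewrite /Y k0 Fbd //.
      have : 0 <= recW dx (fun j => rho j p) 1 * psi 0 * U.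
        by apply: mulr_ge0 => //; apply: mulr_ge0 => //; [rewrite -k0 | lra].
      lra.
    have hk : (0 < k < M)%N by rewrite lt0n kn0.
    have hk' : (0 < k <= M)%N by rewrite lt0n kn0 ltnW.
    rewrite /Y Fint //.
    have [e0' _ _ _] := HrE k p hk'.
    have [s1 s2 s3 s4] := HsE k.+1 hk1.
    have [s5 s6 _ _] := HsE k hk'.
    have [q1 q2 q3 q4] := Hpos k p (ltnW HkM).
    have t1 : 0 <= recE dx (fun j => rho j p) k * psi (recW dx (sigma rho) k.+1) * posp (u (dx * k%:R) p).
      by apply: mulr_ge0 => //; apply: mulr_ge0 => //; apply: Hpnn; rewrite s3 s4.
    have t2 : recW dx (fun j => rho j p) k.+1 * psi (recE dx (sigma rho) k) * (- negp (u (dx * k%:R) p))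
        <= recW dx (fun j => rho j p) k.+1 * psi 0 * U.
      have ps0 : 0 <= psi (recE dx (sigma rho) k) by apply: Hpnn; rewrite s5 s6.
      apply: ler_pM; [by apply: mulr_ge0 | lra | | lra].
      by apply: ler_pM => //; apply: Hple.
    lra.
  have : lam * (X - Y) <= lam * ((recE dx (fun j => rho j p) k.+1 + recW dx (fun j => rho j p) k.+1) * psi 0 * U).
    by apply: ler_wpM2l => //; lra.
  rewrite rec_sum.
  have : rho k.+1 p * (4 * (lam * U) * psi 0) <= rho k.+1 p * 2 by apply: ler_wpM2l.
  lra.
have eS : sigma (step M dx dt psi u rho) k.+1 = sigma rho k.+1 -
    lam * (\sum_(p < P) flux M dx psi u rho k.+1 p - \sum_(p < P) flux M dx psi u rho k p).
  by rewrite /sigma /step /= sumrB -mulr_sumr sumrB.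
rewrite eS.
have [s1 s2 s3 s4] := HsE k.+1 hk1.
set pE := psi (recE dx (sigma rho) k.+1); set pW := psi (recW dx (sigma rho) k.+1).
have pE0 : 0 <= pE by apply: Hpnn; rewrite s1 s2.
have pW0 : 0 <= pW by apply: Hpnn; rewrite s3 s4.
have hS1 : - (\sum_(p < P) flux M dx psi u rho k.+1 p) <= 2 * alpha * U * pE.
  case: (ltnP k.+1 M) => h.
    have hsum : \sum_(p < P) - (pE * U * recW dx (fun j => rho j p) k.+2)
        <= \sum_(p < P) flux M dx psi u rho k.+1 p.
      apply: ler_sum => p _; rewrite Fint ?h // -/pE.
      have [_ _ s5 s6] := HsE k.+2 h.
      have [e0 _ _ _] := HrE k.+1 p hk1; have [_ w0 _ _] := HrE k.+2 p h.
      have [q1 q2 q3 q4] := Hpos k.+1 p (ltnW h).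
      have t1 : 0 <= recE dx (fun j => rho j p) k.+1 * psi (recW dx (sigma rho) k.+2) * posp (u (dx * k.+1%:R) p).
        by apply: mulr_ge0 => //; apply: mulr_ge0 => //; apply: Hpnn; rewrite s5 s6.
      have t2 : recW dx (fun j => rho j p) k.+2 * pE * (- negp (u (dx * k.+1%:R) p))
          <= recW dx (fun j => rho j p) k.+2 * pE * U.
        by apply: ler_wpM2l; [apply: mulr_ge0 | lra].
      lra.
    have hW : \sum_(p < P) recW dx (fun j => rho j p) k.+2 <= 2 * alpha.
      apply: (@le_trans _ _ (\sum_(p < P) 2 * rho k.+2 p)).
        by apply: ler_sum => p _; have [_ _ _ ?] := HrE k.+2 p h.
      rewrite -mulr_sumr; have := Hsig k.+2 (leqW h); rewrite /sigma; lra.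
    move: hsum; rewrite sumrN -mulr_sumr => hsum.
    have : pE * U * \sum_(p < P) recW dx (fun j => rho j p) k.+2 <= pE * U * (2 * alpha).
      by apply: ler_wpM2l => //; apply: mulr_ge0.
    lra.
  rewrite big1 ?oppr0; first by apply: mulr_ge0 => //; apply: mulr_ge0 => //; lra.
  by move=> p _; apply: Fbd; rewrite h orbT.
have hS2 : \sum_(p < P) flux M dx psi u rho k p <= 2 * alpha * U * pW.
  case: (eqVneq k 0%N) => [k0|kn0].
    rewrite big1; first by apply: mulr_ge0 => //; apply: mulr_ge0 => //; lra.
    by move=> p _; rewrite k0 Fbd.
  have hk : (0 < k < M)%N by rewrite lt0n kn0.
  have hk' : (0 < k <= M)%N by rewrite lt0n kn0 ltnW.
  have hsum : \sum_(p < P) flux M dx psi u rho k p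
      <= \sum_(p < P) pW * U * recE dx (fun j => rho j p) k.
    apply: ler_sum => p _; rewrite Fint // -/pW.
    have [e0 _ _ _] := HrE k p hk'; have [_ w0 _ _] := HrE k.+1 p hk1.
    have [s5 s6 _ _] := HsE k hk'.
    have [q1 q2 q3 q4] := Hpos k p (ltnW HkM).
    have t1 : recE dx (fun j => rho j p) k * pW * posp (u (dx * k%:R) p)
        <= recE dx (fun j => rho j p) k * pW * U.
      by apply: ler_wpM2l => //; apply: mulr_ge0.
    have t2 : recW dx (fun j => rho j p) k.+1 * psi (recE dx (sigma rho) k) * negp (u (dx * k%:R) p) <= 0.
      by apply: mulr_ge0_le0 => //; apply: mulr_ge0 => //; apply: Hpnn; rewrite s5 s6.
    lra.
  have hE : \sum_(p < P) recE dx (fun j => rho j p) k <= 2 * alpha.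
    apply: (@le_trans _ _ (\sum_(p < P) 2 * rho k p)).
      by apply: ler_sum => p _; have [_ _ ? _] := HrE k p hk'.
    rewrite -mulr_sumr; have := Hsig k (leqW (ltnW HkM)); rewrite /sigma; lra.
  move: hsum; rewrite -mulr_sumr => hsum.
  have : pW * U * \sum_(p < P) recE dx (fun j => rho j p) k <= pW * U * (2 * alpha).
    by apply: ler_wpM2l => //; apply: mulr_ge0.
  lra.
have a1 : lam * (2 * alpha * U * pE) <= (alpha - recE dx (sigma rho) k.+1) / 2.
  have := ler_wpM2r (mulr_ge0 (ltW Ha) pE0) HK1.
  have := Hg _ (introT andP (conj s1 s2)); rewrite -/pE; lra.
have a2 : lam * (2 * alpha * U * pW) <= (alpha - recW dx (sigma rho) k.+1) / 2.
  have := ler_wpM2r (mulr_ge0 (ltW Ha) pW0) HK1.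
  have := Hg _ (introT andP (conj s3 s4)); rewrite -/pW; lra.
have := @rec_sum R dx (sigma rho) k.+1.
have := ler_wpM2l Hlam hS1; have := ler_wpM2l Hlam hS2.
lra.
Qed.
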